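(* Let $d,k\ge 1$ be integers. Define $C_{d,k}$ as follows. If $d$ is odd, write $k=(d+1)q/2+r$ with integers $q\ge 0$ and $1\le r\le (d+1)/2$, and set $$C_{d,k}=(q+1)\left(1+\frac{r-1}{(d+1)(q+2)/2-(r-1)}\right).$$ If $d$ is even, write $k=(d+1)q+r$ with integers $q\ge 0$ and $1\le r\le d+1$, and set $$C_{d,k}=\begin{cases}(2q+1)\left(1+\dfrac{r-1}{(d+1)(q+1)-(r-1)}\right) & \text{if } 1\le r\le d/2+1,\\[2mm] (2q+3)\left(1-\dfrac{d+2-r}{(d+1)(q+1)+(d+2-r)}\right) & \text{otherwise.}\end{cases}$$ Then there is a constant $K_{d,k}$ depending only on $d$ and $k$ such that $f(n,d,k)\le C_{d,k}\,n+K_{d,k}$ for all integers $n\ge 1$.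
   Context: For integers $d\ge 1$, $n\ge 1$, $T_d(n)=\{(x_1,\dots,x_d)\in\mathbb{Z}_{\ge 0}^d : x_1+\dots+x_d\le n-1\}$. A $k$-cover of $T_d(n)$ is a finite multiset of affine hyperplanes in $\mathbb{R}^d$ such that every point of $T_d(n)$ lies in at least $k$ of them (with multiplicity). $f(n,d,k)$ is the minimum cardinality of a $k$-cover of $T_d(n)$. *)

(* Defs.v *)
From HB Require Import structures.
From mathcomp Require Import all_boot all_order all_algebra.
From mathcomp Require Import boolp reals.
Set Implicit Arguments. Unset Strict Implicit. Unset Printing Implicit Defensive.
Import Order.TTheory GRing.Theory Num.Theory.
Local Open Scope ring_scope.

(* An affine hyperplane of R^d is encoded by (a, b) with a <> 0; it is the set
   { x in R^d | sum_i a_i x_i = b }. *)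
Definition hyperplane (R : realType) (d : nat) := ({ffun 'I_d -> R} * R)%type.

Definition is_hyperplane (R : realType) (d : nat) (h : hyperplane R d) : bool :=
  h.1 != 0.

Definition on_hyp (R : realType) (d : nat) (h : hyperplane R d) (x : 'I_d -> nat) : bool :=
  \sum_(i < d) h.1 i * (x i)%:R == h.2.

Definition in_T (d n : nat) (x : 'I_d -> nat) : Prop :=
  (\sum_(i < d) x i <= n - 1)%N.

(* a finite multiset of affine hyperplanes is a list; cardinality = size *)
Definition is_kcover (R : realType) (n d k : nat) (H : seq (hyperplane R d)) : Prop :=
  all (@is_hyperplane R d) H /\
  forall x : 'I_d -> nat, @in_T d n x -> (k <= count (fun h => on_hyp h x) H)%N.

Definition has_kcover_of_size (R : realType) (n d k m : nat) : Prop :=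
  exists H : seq (hyperplane R d), size H = m /\ @is_kcover R n d k H.

(* f(n,d,k): minimum cardinality of a k-cover of T_d(n) (0 if none exists,
   which never happens for d >= 1). *)
Definition f (R : realType) (n d k : nat) : nat :=
  match pselect (exists m, has_kcover_of_size R n d k m) with
  | left ex => ex_minn (P := fun m => `[< has_kcover_of_size R n d k m >])
                 (let: ex_intro m Hm := ex in ex_intro _ m (asboolT Hm))
  | right _ => 0%N
  end.

(* The constant C_{d,k}. For d odd, m = (d+1)/2 and k = m q + r with 1 <= r <= m,
   i.e. q = (k-1) %/ m, r = (k-1) %% m + 1. For d even, likewise with m = d+1. *)
Definition C (R : realType) (d k : nat) : R :=
  if odd d then
    let m := (d.+1 %/ 2)%N in
    let q := ((k - 1) %/ m)%N in
    let r := ((k - 1) %% m).+1 in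
    (q.+1)%:R * (1 + (r - 1)%:R / (((d.+1 * (q + 2)) %/ 2)%:R - (r - 1)%:R))
  else
    let m := d.+1 in
    let q := ((k - 1) %/ m)%N in
    let r := ((k - 1) %% m).+1 in
    if (r <= d %/ 2 + 1)%N then
      (2 * q + 1)%:R * (1 + (r - 1)%:R / ((d.+1 * q.+1)%:R - (r - 1)%:R))
    else
      (2 * q + 3)%:R * (1 - (d + 2 - r)%:R / ((d.+1 * q.+1)%:R + (d + 2 - r)%:R)).

(* Main.v *)
Require Import Defs.
From HB Require Import structures.
From mathcomp Require Import all_boot all_order all_algebra.
From mathcomp Require Import boolp reals.
From mathcomp Require Import zify.
Import Order.TTheory GRing.Theory Num.Theory.
Local Open Scope ring_scope.

Section Constr.
Variables (R : realType) (d n A B : nat).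

Definition yv (x : 'I_d -> nat) (j : 'I_d.+1) : nat :=
  match unlift ord0 j with
  | Some i => x i
  | None => (n - 1 - \sum_(i < d) x i)%N
  end.

Definition hyp (j : 'I_d.+1) (c : nat) : hyperplane R d :=
  match unlift ord0 j with
  | Some i => ([ffun l => (l == i)%:R], c%:R)
  | None => ([ffun _ => 1], (n - 1 - c)%:R)
  end.

Lemma on_hyp_yv x j : in_T n x -> on_hyp (hyp j (yv x j)) x.
Proof.
rewrite /in_T /on_hyp /hyp /yv => hx.
case: (unlift ord0 j) => [i|] /=.
  rewrite (bigD1 i) //= ffunE eqxx mul1r big1 ?addr0 //.
  by move=> l /negbTE hl; rewrite ffunE hl mul0r.
under eq_bigr do rewrite ffunE mul1r.
by rewrite -natr_sum subKn.
Qed.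

Lemma hyp_ok j c : (0 < d)%N -> is_hyperplane (hyp j c).
Proof.
move=> d0; rewrite /is_hyperplane /hyp.
case: (unlift ord0 j) => [i|] /=; apply/eqP => /ffunP.
  by move=> /(_ i); rewrite !ffunE eqxx => /eqP; rewrite oner_eq0.
by move=> /(_ (Ordinal d0)); rewrite !ffunE => /eqP; rewrite oner_eq0.
Qed.

Definition Hji j i := [seq hyp j c | c <- [seq c <- index_iota 0 n | (B * c < i.+1 * n)%N]].
Definition Hj j := flatten [seq Hji j i | i <- index_iota 0 A].
Definition H := flatten [seq Hj j | j <- index_enum 'I_d.+1].

Lemma count_Hji x j i : in_T n x -> (0 < n)%N ->
  ((B * yv x j < i.+1 * n)%N <= count (fun h => on_hyp h x) (Hji j i))%N.
Proof.
move=> hx n0; case hB: (B * yv x j < i.+1 * n)%N => //; rewrite -has_count; apply/hasP.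
exists (hyp j (yv x j)); last exact: on_hyp_yv.
apply/mapP; exists (yv x j) => //; rewrite mem_filter hB mem_index_iota /=.
rewrite /yv; case: (unlift ord0 j) => [i'|]; last lia.
move: hx; rewrite /in_T (bigD1 i') //=; lia.
Qed.

Lemma count_H x : in_T n x -> (0 < n)%N ->
  (\sum_(j < d.+1) \sum_(i < A) (B * yv x j < i.+1 * n)%N <=
   count (fun h => on_hyp h x) H)%N.
Proof.
move=> hx n0; rewrite /H count_flatten sumnE !big_map.
apply: leq_sum => j _; rewrite /Hj count_flatten sumnE !big_map big_mkord.
apply: leq_sum => i _; exact: count_Hji.
Qed.

Lemma cnt_le M : (0 < B)%N ->
  (count (fun c => B * c < M)%N (index_iota 0 n) <= (M + B - 1) %/ B)%N.
Proof.
move=> B0; rewrite -size_filter.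
have -> : ((M + B - 1) %/ B = size (iota 0 ((M + B - 1) %/ B)))%N by rewrite size_iota.
apply: uniq_leq_size; first by rewrite filter_uniq // iota_uniq.
move=> c; rewrite mem_filter mem_iota /= => /andP[hc _].
rewrite add0n leq_divRL //; lia.
Qed.

Lemma size_H : size H = (d.+1 * \sum_(i < A) count (fun c => B * c < i.+1 * n)%N (index_iota 0 n))%N.
Proof.
rewrite /H size_flatten /shape -map_comp sumnE big_map.
rewrite (eq_bigr (fun _ => \sum_(i < A) count (fun c => B * c < i.+1 * n)%N (index_iota 0 n))).
  by rewrite big_const_ord iter_addn_0 mulnC.
move=> j _ /=; rewrite /Hj size_flatten /shape -map_comp sumnE big_map big_mkord.
by apply: eq_bigr => i _ /=; rewrite /Hji size_map size_filter.
Qed.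

Lemma per_j y : (0 < n)%N ->
  (A - B * y %/ n <= \sum_(i < A) (B * y < i.+1 * n)%N)%N.
Proof.
move=> n0; elim: A => [|a IH]; first by rewrite big_ord0.
rewrite big_ord_recr /=.
case: (leqP (B * y %/ n) a) => h.
  have -> : (B * y < a.+1 * n)%N by rewrite -ltn_divLR.
  move: IH; rewrite /=; lia.
lia.
Qed.

Lemma sum_yv x : in_T n x -> (\sum_(j < d.+1) yv x j = n - 1)%N.
Proof.
rewrite /in_T => hx; rewrite big_ord_recl.
under eq_bigr do rewrite /yv liftK.
rewrite /yv unlift_none.
by rewrite subnK.
Qed.

Lemma is_cover k : (0 < d)%N -> (0 < n)%N -> (0 < B)%N -> (B + k <= d.+1 * A + 1)%N ->
  is_kcover n k H.
Proof.
move=> d0 n0 B0 hk; split.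
  apply/allP => h /flattenP [s /mapP [j _ ->]] /flattenP [s' /mapP [i _ ->]].
  by move=> /mapP [c _ ->]; apply: hyp_ok.
move=> x hx; apply: leq_trans _ (count_H x hx n0).
have h1 : (\sum_(j < d.+1) (A - B * yv x j %/ n) <=
          \sum_(j < d.+1) \sum_(i < A) (B * yv x j < i.+1 * n)%N)%N.
  by apply: leq_sum => j _; apply: per_j.
apply: leq_trans _ h1.
have h2 : (\sum_(j < d.+1) (B * yv x j %/ n) <= (B * (n - 1)) %/ n)%N.
  rewrite -(sum_yv x hx) big_distrr /=.
  elim/big_rec2: _ => // j a b _ IH.
  rewrite leq_divRL // mulnDl (leq_add (leq_divM _ _)) //.
  by rewrite -leq_divRL.
have h3 : ((B * (n - 1)) %/ n < B)%N by rewrite ltn_divLR //; nia.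
have h4 : (d.+1 * A <= \sum_(j < d.+1) (A - B * yv x j %/ n) + \sum_(j < d.+1) (B * yv x j %/ n))%N.
  rewrite -big_split /=.
  have -> : (d.+1 * A = \sum_(j < d.+1) A)%N by rewrite big_const_ord iter_addn_0 mulnC.
  by apply: leq_sum => j _; lia.
lia.
Qed.

Lemma cost_bound : (0 < B)%N ->
  (2 * (B * \sum_(i < A) count (fun c => B * c < i.+1 * n)%N (index_iota 0 n))
   <= n * A * A.+1 + 2 * A * B)%N.
Proof.
move=> B0; elim: A => [|a IH]; first by rewrite big_ord0; lia.
rewrite big_ord_recr /=.
have := cnt_le (a.+1 * n) B0.
set t := count _ _ => ht.
have : (t * B <= a.+1 * n + B - 1)%N.
  by apply: leq_trans (leq_mul ht (leqnn B)) _; rewrite leq_divM.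
move: IH; set S := (\sum_(i < a) _)%N; nia.
Qed.
End Constr.

From mathcomp Require Import ring.

Lemma f_le (R : realType) n d k N :
  (exists H : seq (hyperplane R d), size H = N /\ is_kcover n k H) -> (f R n d k <= N)%N.
Proof.
move=> hN; rewrite /f; case: pselect => [ex|] //.
case: ex_minnP => m _ hm; apply: hm; exact/asboolP.
Qed.

Lemma construction (R : realType) d k A B : (0 < d)%N -> (0 < B)%N ->
  (B + k <= d.+1 * A + 1)%N -> forall n, (0 < n)%N ->
  (f R n d k)%:R <= (d.+1 * A * A.+1)%:R / (2 * B)%:R * n%:R + (d.+1 * A)%:R :> R.
Proof.
move=> d0 B0 hk n n0.
have hf := f_le R n d k (size (H R d n A B))
  (ex_intro _ (H R d n A B) (conj erefl (is_cover R d n A B k d0 n0 B0 hk))).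
rewrite size_H in hf.
have hS := cost_bound n A B B0.
set S := (\sum_(i < A) _)%N in hf hS.
apply: le_trans (_ : (d.+1 * S)%:R <= _); first by rewrite ler_nat.
have -> : (d.+1 * A * A.+1)%:R / (2 * B)%:R * n%:R + (d.+1 * A)%:R
   = (d.+1 * (n * A * A.+1 + 2 * A * B))%:R / (2 * B)%:R :> R.
  rewrite !natrM !natrD !natrM; field.
  by rewrite pnatr_eq0 -lt0n.
rewrite ler_pdivlMr ?ltr0n ?muln_gt0 ?B0 // -natrM ler_nat.
nia.
Qed.

Theorem mainTheorem10 (R : realType) (d k : nat) :
  (1 <= d)%N -> (1 <= k)%N ->
  exists K : R, forall n : nat, (1 <= n)%N ->
    (f R n d k)%:R <= C R d k * n%:R + K.
Proof.
move=> d1 k1.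
suff [A [B [B0 [hk hC]]]] : exists A B, (0 < B)%N /\ (B + k <= d.+1 * A + 1)%N /\
    C R d k = (d.+1 * A * A.+1)%:R / (2 * B)%:R.
  by exists (d.+1 * A)%:R => n n1; rewrite hC; exact: construction.
rewrite /C; case: ifP => hodd.
  set m := (d.+1 %/ 2)%N.
  have hm : d.+1 = (m * 2)%N.
    by rewrite divnK // dvdn2 /= hodd.
  have m0 : (0 < m)%N by lia.
  set q := ((k - 1) %/ m)%N; set r := ((k - 1) %% m)%N.
  have hr : (r < m)%N by rewrite ltn_pmod.
  have hkq : (k - 1 = q * m + r)%N by rewrite /q /r -divn_eq.
  exists q.+1, (m * (q + 2) - r)%N; split; first by nia.
  split; first by nia.
  have hX : (r <= m * (q + 2))%N by nia.
  have hne : ((m * (q + 2))%:R - r%:R != 0 :> R) by rewrite -natrB // pnatr_eq0; lia.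
  rewrite subSS subn0 hm [(m * 2)%N]mulnC -!mulnA mulKn //.
  rewrite [(2 * (m * (q + 2) - r))%:R]natrM natrB // -[q.+2]addn2 -[q.+1]addn1.
  move: hne; rewrite !natrM !natrD => hne.
  by clearbody q r m; field.
set q := ((k - 1) %/ d.+1)%N; set r := ((k - 1) %% d.+1)%N.
have hr : (r < d.+1)%N by rewrite ltn_pmod.
have hkq : (k - 1 = q * d.+1 + r)%N by rewrite /q /r -divn_eq.
case: ifP => hc.
  exists (2 * q + 1)%N, (d.+1 * q.+1 - r)%N; split; first by nia.
  split; first by nia.
  have hX : (r <= d.+1 * q.+1)%N by nia.
  have hne : ((d.+1 * q.+1)%:R - r%:R != 0 :> R) by rewrite -natrB // pnatr_eq0; lia.
  rewrite subSS subn0 [(2 * (d.+1 * q.+1 - r))%:R]natrM natrB //.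
  rewrite -[(2 * q + 1).+1]addn1 -[q.+1]addn1.
  move: hne; rewrite -[q.+1]addn1 !natrM !natrD => hne.
  by set D := d.+1 in hne *; clearbody q r D; field.
set E := (d + 2 - r.+1)%N.
exists (2 * q + 2)%N, (d.+1 * q.+1 + E)%N; split; first by lia.
split; first by rewrite /E; nia.
have hne : ((d.+1 * q.+1)%:R + E%:R != 0 :> R) by rewrite -natrD pnatr_eq0; lia.
rewrite [(2 * (d.+1 * q.+1 + E))%:R]natrM natrD.
move: hne; set D := d.+1; clearbody q r E D => hne.
rewrite -[(2 * q + 2).+1]addn1.
move: hne; rewrite -[q.+1]addn1 !natrM !natrD => hne.
by field.
Qed.
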